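(* Let $(\Omega,\mathcal{F},\mathbb{P})$ be a probability space, let $N\in\mathbb{N}$, $\alpha\in\mathbb{R}$, $\varepsilon\in(0,1)$, $\delta\in(0,\varepsilon)$, let $X_1,\dots,X_N\colon\Omega\to(0,\infty)$ be random variables, and assume for all $i\in\{1,\dots,N\}$, $x\in(0,\infty)$ that $\mathbb{P}(N^\alpha X_i\le x)=[\tfrac2\pi]^{1/2}\int_0^x\exp(-\tfrac{y^2}{2})\,\mathrm{d}y$. Then $$\mathbb{P}\big(\max\{X_1,\dots,X_N\}\ge N^{-\alpha+\varepsilon}\big)\le(\varepsilon-\delta)^{-1}N^{-\delta}.$$ *)

(* Defs.v *)
From HB Require Import structures.
From mathcomp Require Import all_boot all_order all_algebra.
From mathcomp Require Export all_classical all_reals all_analysis.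
Set Implicit Arguments. Unset Strict Implicit. Unset Printing Implicit Defensive.

(* Main.v *)
Require Import Defs.
From HB Require Import structures.
From mathcomp Require Import all_boot all_order all_algebra.
From mathcomp Require Import all_classical all_reals all_analysis.
From mathcomp Require Import measurable_realfun ring lra.
Import Order.TTheory GRing.Theory Num.Theory.
Import numFieldNormedType.Exports.
Local Open Scope classical_set_scope.
Local Open Scope ring_scope.

Lemma e_ge94 (R : realType) : 9/4 <= expR (1:R).
Proof.
have h : (3/2 : R) <= expR (1/2) by have := @expR_ge1Dx R (1/2); lra.
rewrite -[X in expR X](_ : 1/2 + 1/2 = (1:R)); last by lra.
rewrite expRD.
have : (3/2:R) * (3/2) <= expR (1/2) * expR (1/2).
  apply: ler_pM => //; lra.
move=> hh; apply: le_trans hh; lra.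
Qed.

Lemma real_part (R : realType) (L eps delta : R) : 0 <= L -> 0 < delta -> delta < eps -> eps < 1 ->
  (eps - delta)^-1 * expR (- delta * L) < 1 ->
  expR L * (expR (- ((99/100 * expR (eps * L)) ^+ 2) / 2) / (99/100 * expR (eps * L)))
   <= (eps - delta)^-1 * expR (- delta * L).
Proof.
move=> L0 d0 de eps1 H.
set a := eps - delta.
have a0 : 0 < a by rewrite /a; lra.
have a1 : a < 1 by rewrite /a; lra.
set u := eps * L.
have u0 : 0 <= u by rewrite /u mulr_ge0 //; lra.
set y := - ln a.
have ea : expR y = a^-1 by rewrite /y -lnV ?lnK // ?posrE ?invr_gt0.
have ai : 0 < a^-1 by rewrite invr_gt0.
have hy : y < delta * L.
  have : expR (- delta * L) < a.
    by rewrite -(ltr_pM2l ai) mulVf ?gt_eqF.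
  rewrite -[a]lnK ?posrE // ltr_expR /y; lra.
set k : R := 99/100.
have k0 : 0 < k by rewrite /k; lra.
set E := expR u.
have E1 : 1 <= E by have := expR_ge1Dx u; rewrite /E; lra.
set c := k * E.
have c0 : 0 < c by rewrite /c mulr_gt0 // (lt_le_trans _ E1).
have lnc : ln c = ln k + u by rewrite /c lnM ?posrE ?expR_gt0 // /E expRK.
have -> : expR L * (expR (- c ^+ 2 / 2) / c) = expR (L - c ^+ 2 / 2 - ln c).
  by rewrite expRB expRD lnK ?posrE // mulrA mulNr.
have -> : a^-1 * expR (- delta * L) = expR (y - delta * L).
  by rewrite expRB ea mulNr expRN mulrC.
rewrite ler_expR lnc.
have dL : delta * L = u - a * L by rewrite /u /a; ring.
have G0 : L - a * L - y <= a^-1 * (u - y) - u.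
  have h1 : 0 <= (1 - a) / a * (u - y - a * L).
    apply: mulr_ge0; first by apply: divr_ge0; lra.
    lra.
  have h2 : (1 - a) / a * (u - y - a * L) = a^-1 * (u - y) - u - (L - a * L - y).
    by field; rewrite gt_eqF.
  lra.
have F3 : a^-1 * (u - y) <= expR (u - 1).
  rewrite -ea.
  have := expR_ge1Dx (u - y - 1).
  move=> h; apply: le_trans (ler_wpM2l (expR_ge0 y) (_ : u - y <= expR (u - y - 1))) _.
    lra.
  by rewrite -expRD (_ : y + (u - y - 1) = u - 1) //; ring.
have em1 : expR (-1) <= 4/9 :> R.
  have h1 := @expRxMexpNx_1 R 1.
  have h2 := e_ge94 R.
  have h3 : expR (-1) * (9/4) <= expR (-1) * expR (1:R).
    by apply: ler_wpM2l => //; exact: expR_ge0.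
  lra.
have F4 : expR (u - 1) <= 4/9 * (E ^+ 2).
  rewrite addrC expRD -/E.
  apply: le_trans (_ : expR (-1) * E ^+ 2 <= _).
    by apply: ler_wpM2l; [exact: expR_ge0| rewrite expr2 ler_peMl //; lra].
  by apply: ler_wpM2r; [apply: exprn_ge0; lra | exact: em1].
have lk : - (1/99) <= ln k.
  have hk : k = (1 + 1/99)^-1 by rewrite /k; field.
  rewrite hk lnV ?posrE; last by lra.
  have := @le_ln1Dx R (1/99); lra.
have cE : c ^+ 2 = k ^+ 2 * E ^+ 2 by rewrite /c exprMn.
rewrite cE /k.
have E2 : 1 <= E ^+ 2 by rewrite expr2; have := ler_pM ler01 ler01 E1 E1; rewrite mulr1.
rewrite dL.
lra.
Qed.
Lemma d_inner (R : realType) (y : R) : is_derive y 1 (fun t : R => - (t ^+ 2) / 2) (- y).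
Proof.
apply: is_derive_eq.
rewrite !scaler0 add0r /GRing.scale /=; lra.
Qed.

Lemma d_f (R : realType) (y : R) :
  is_derive y 1 (fun t : R => expR (- (t ^+ 2) / 2)) (expR (- (y ^+ 2) / 2) * - y).
Proof.
have h := (is_derive1_comp (f := expR) (g := fun t : R => - (t ^+ 2) / 2)
   (is_derive_expR _) (d_inner _ y)).
exact h.
Qed.

Lemma cont_f (R : realType) : continuous (fun t : R => expR (- (t ^+ 2) / 2)).
Proof.
move=> y; apply/differentiable_continuous/derivable1_diffP.
exact: (@ex_derive _ _ _ _ _ _ _ (d_f _ y)).
Qed.

Lemma gauss_tail (R : realType) (c : R) : 0 < c ->
  (\int[lebesgue_measure]_(y in `]c, +oo[) (expR (- (y ^+ 2) / 2))%:E
    <= (expR (- (c ^+ 2) / 2) / c)%:E)%E.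
Proof.
move=> c0.
set f := fun y : R => expR (- (y ^+ 2) / 2).
set g := fun y : R => y * f y / c.
set F := fun y : R => - f y / c.
have dF (y : R) : is_derive y (1:R) F (g y).
  rewrite /F /g.
  apply: is_derive_eq.
  rewrite !scaler0 ?mulr0 ?add0r ?addr0 /GRing.scale /= -/(f y).
  by field; rewrite gt_eqF.
have mf : measurable_fun setT f := continuous_measurable_fun (cont_f R).
have cg : continuous g.
  move=> y; rewrite /g.
  apply: cvgM; last exact: cvg_cst.
  apply: cvgM; [exact: cvg_id | exact: cont_f].
have mg : measurable_fun setT g := continuous_measurable_fun cg.
have fge0 y : 0 <= f y by exact: expR_ge0.
apply: (@le_trans _ _ (\int[lebesgue_measure]_(y in `]c, +oo[) (g y)%:E)%E).
  apply: ge0_le_integral => //.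
  - by apply/measurable_EFinP; exact: measurable_funS mf.
  - by apply/measurable_EFinP; exact: measurable_funS mg.
  move=> y; rewrite /= in_itv /= andbT => cy; rewrite lee_fin /g.
  rewrite -/(f y) mulrAC -[X in X <= _]mul1r; apply: ler_wpM2r => //.
  by rewrite ler_pdivlMr // mul1r ltW.
apply: (@le_trans _ _ (\int[lebesgue_measure]_(y in `[c, +oo[) (g y)%:E)%E).
  apply: ge0_subset_integral => //.
  - by apply/measurable_EFinP; exact: measurable_funS mg.
  - move=> y; rewrite /= in_itv /= andbT => cy; rewrite lee_fin /g.
    by apply: divr_ge0; [apply: mulr_ge0 => //; apply: le_trans cy; exact: ltW|exact: ltW].
  by move=> y; rewrite /= !in_itv /= !andbT; exact: ltW.
have fcvg : f y @[y --> +oo] --> (0:R).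
  rewrite /f.
  have -> : (fun y : R => expR (- y ^+ 2 / 2)) = (fun t => expR (- t)) \o (fun y : R => y ^+ 2 / 2).
    by apply/funext => y /=; rewrite mulNr.
  apply: cvg_comp; last exact: cvgr_expR.
  apply/cvgryPge => A.
  near=> x.
  have x1 : 1 <= x by near: x; apply: nbhs_pinfty_ge; exact: num_real.
  have x2 : 2 * A <= x by near: x; apply: nbhs_pinfty_ge; exact: num_real.
  rewrite ler_pdivlMr //; nra.
have -> : (\int[lebesgue_measure]_(y in `[c, +oo[) (g y)%:E = 0%:E - (F c)%:E)%E.
  apply: ge0_continuous_FTC2y.
  - move=> y cy; rewrite /g; apply: divr_ge0; last exact: ltW.
    by apply: mulr_ge0 => //; apply: le_trans cy; exact: ltW.
  - exact: continuous_subspaceT.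
  - rewrite /F.
    have := cvgM (cvgN fcvg) (cvg_cst (c^-1 : R)).
    rewrite oppr0 mul0r; move=> h; apply: h; exact: _.
  - by move=> y _; exact: ex_derive.
  - apply: cvg_at_right_filter.
    apply/differentiable_continuous/derivable1_diffP; exact: ex_derive.
  - by move=> y _; rewrite derive1E derive_val.
rewrite sub0e -EFinN lee_fin /F /f mulNr opprK.
Unshelve. all: by end_near. Qed.

Lemma prob_tail (R : realType) (d : measure_display) (T : measurableType d)
  (P : probability T R) (Z : T -> R) (mZ : measurable_fun setT Z) (K : R) (K0 : 0 <= K)
  (hyp : forall x, 0 < x -> P [set w | Z w <= x] =
     (K%:E * \int[lebesgue_measure]_(y in `[0%R, x]%classic) (expR (- (y ^+ 2) / 2))%:E)%E)
  (c : R) (c0 : 0 < c) :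
  (P [set w | (c < Z w)%R] <= (K * (expR (- (c ^+ 2) / 2) / c))%:E)%E.
Proof.
set f := fun y : R => expR (- (y ^+ 2) / 2).
have mf : measurable_fun setT f := continuous_measurable_fun (cont_f R).
have mEf : measurable_fun setT (fun y => (f y)%:E) by exact/measurable_EFinP.
have fge0 y : (0 <= (f y)%:E)%E by rewrite lee_fin; exact: expR_ge0.
have mpre (A : set R) : measurable A -> measurable (Z @^-1` A).
  by move=> mA; rewrite -[X in measurable X]setTI; exact: mZ.
have mle x : measurable [set w | Z w <= x].
  have -> : [set w | Z w <= x] = Z @^-1` `]-oo, x] by apply/seteqP; split => w /=; rewrite in_itv.
  exact: mpre.
set S := fun n : nat => Z @^-1` `]c, c + n%:R].
have mS n : measurable (S n) by exact: mpre.
set I0c := (\int[lebesgue_measure]_(y in `[0%R, c]) (f y)%:E)%E.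
set Ic := (\int[lebesgue_measure]_(y in `]c, +oo[) (f y)%:E)%E.
have Sn n : (P (S n) <= K%:E * Ic)%E.
  have U : [set w | Z w <= c + n%:R] = [set w | Z w <= c] `|` S n.
    apply/seteqP; split => w /=; rewrite ?in_itv /=.
      by move=> h; case: (boolP (Z w <= c)) => hc; [left|right; rewrite /S /= in_itv /= ltNge hc h].
    case=> [h|/andP[_ h]] //; apply: le_trans h _; rewrite lerDl; exact: ler0n.
  have disj : [set w | Z w <= c] `&` S n = set0.
    by apply/seteqP; split => w //= [h]; rewrite /S /= in_itv /= => /andP[h' _]; move: h'; rewrite ltNge h.
  have h1 := measureU P (mle c) (mS n) disj.
  rewrite -U in h1.
  have cn : 0 < c + n%:R by apply: ltr_wpDr => //; exact: ler0n.
  have e1 : P [set w | Z w <= c + n%:R] = _ := hyp _ cn.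
  have e0 : P [set w | Z w <= c] = _ := hyp _ c0.
  have {h1}h1 : (K%:E * \int[lebesgue_measure]_(y in `[0%R, (c + n%:R)%R]) (f y)%:E = K%:E * I0c + P (S n))%E.
    by rewrite -e1 -e0; exact: h1.
  have h2 : (\int[lebesgue_measure]_(y in `[0%R, (c + n%:R)%R]) (f y)%:E <= I0c + Ic)%E.
    apply: (@le_trans _ _ (\int[lebesgue_measure]_(y in `[0%R, +oo[%classic) (f y)%:E)%E).
      apply: ge0_subset_integral => //.
      - exact: measurable_funS mEf.
      - by move=> y; rewrite /= !in_itv /= => /andP[-> _].
    have -> : `[0%R, +oo[%classic = `[0%R, c]%classic `|` `]c, +oo[%classic :> set R.
      rewrite -itv_bndbnd_setU //= ?bnd_simp; exact: ltW.
    rewrite ge0_integral_setU //.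
    - exact: measurable_funS mEf.
    - rewrite disj_set2E; apply/eqP/seteqP; split => y //= [].
      by rewrite !in_itv /= => /andP[_ h] /andP[h' _]; move: h'; rewrite ltNge h.
  have finc : (K%:E * I0c)%E \is a fin_num.
    rewrite -e0 ge0_fin_numE ?measure_ge0 //.
    by apply: (le_lt_trans (probability_le1 P (mle c))); exact: ltry.
  have : (K%:E * I0c + P (S n) <= K%:E * I0c + K%:E * Ic)%E.
    rewrite -h1 -ge0_muleDr //; last by apply: integral_ge0 => y _.
      by apply: lee_wpmul2l => //; rewrite lee_fin.
    by apply: integral_ge0 => y _.
  by rewrite leeD2lE.
have bc : [set w | (c < Z w)%R] = \bigcup_n S n.
  apply/seteqP; split => w /=.
  - move=> h; exists (Num.truncn (Z w - c)).+1 => //=.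
    rewrite /S /= in_itv /= h /= -lerBlDl; apply: ltW; exact: truncnS_gt.
  - by move=> [n _]; rewrite /S /= in_itv /= => /andP[].
have nd : nondecreasing_seq S.
  move=> n m nm; apply/subsetPset => w; rewrite /S /= !in_itv /= => /andP[-> h] /=.
  by apply: le_trans h _; rewrite lerD2l ler_nat.
have cv := nondecreasing_cvg_mu (mu := P) mS (bigcupT_measurable _ mS) nd.
rewrite bc -(cvg_lim _ cv) //; apply: lime_le.
  by apply/cvg_ex; eexists; exact: cv.
apply: nearW => n /=; apply: le_trans (Sn n) _; rewrite EFinM.
by apply: lee_wpmul2l; [rewrite lee_fin | exact: gauss_tail].
Qed.

Theorem lemma2p34 (R : realType) (d : measure_display) (T : measurableType d)
  (P : probability T R) (N : nat) (alpha eps delta : R)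
  (X : 'I_N -> T -> R) :
  (0 < N)%N ->
  0 < eps < 1 ->
  0 < delta < eps ->
  (forall i, measurable_fun setT (X i)) ->
  (forall i w, 0 < X i w) ->
  (forall i (x : R), 0 < x ->
     P [set w | N%:R `^ alpha * X i w <= x] =
     ((Num.sqrt (2 / pi))%:E *
       \int[lebesgue_measure]_(y in `[0%R, x]%classic) (expR (- (y ^+ 2) / 2))%:E)%E) ->
  (P [set w | (N%:R `^ (- alpha + eps) <= \big[Order.max/0]_(i < N) X i w)%R]
     <= ((eps - delta)^-1 * N%:R `^ (- delta))%:E)%E.
Proof.
move=> N0 /andP[e0 e1] /andP[d0 de] mX Xpos hyp.
destruct N as [|n]; first by [].
set Np : R := n.+1%:R.
have Np1 : 1 <= Np by rewrite /Np ler1n.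
have Np0 : 0 < Np by apply: lt_le_trans Np1.
set K := Num.sqrt (2 / pi : R).
have K0 : 0 <= K := sqrtr_ge0 _.
have K1 : K <= 1.
  rewrite /K -[X in _ <= X]sqrtr1; apply: ler_wsqrtr.
  rewrite ler_pdivrMr ?pi_gt0 // mul1r; exact: pi_ge2.
set L := ln Np.
have NpE : Np = expR L by rewrite /L lnK // posrE.
have pE r : Np `^ r = expR (r * L) by rewrite /powR gt_eqF.
set c := 99/100 * expR (eps * L).
have c0 : 0 < c by rewrite /c mulr_gt0 // expR_gt0.
set Z := fun i w => Np `^ alpha * X i w.
have mZ i : measurable_fun setT (Z i).
  by apply: measurable_funM => //; exact: measurable_cst.
set B := K * (expR (- (c ^+ 2) / 2) / c).
have tail i : (P [set w | (c < Z i w)%R] <= B%:E)%E.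
  exact: (@prob_tail _ _ _ P (Z i) (mZ i) K K0 (hyp i) c c0).
set t := Np `^ (- alpha + eps).
set F := fun k : nat => [set w | (c < Z (inord k) w)%R].
set G := fun k : nat => [set w | (t <= X (inord k) w)%R].
have mF k : measurable (F k).
  have -> : F k = Z (inord k) @^-1` `]c, +oo[.
    by apply/seteqP; split => w /=; rewrite in_itv /= andbT.
  by rewrite -[X in measurable X]setTI; apply: mZ.
have eqA : [set w | (t <= \big[Order.max/0]_(i < n.+1) X i w)%R] = \big[setU/set0]_(k < n.+1) G k.
  rewrite -bigcup_mkord; apply/seteqP; split => w /=.
  - have [i0 _ ->] := @eq_bigmax _ _ _ 0 ord0 xpredT (fun i => X i w) isT
        (fun i _ => ltW (Xpos i w)).
    move=> h; exists (val i0) => //=; rewrite /G /= inord_val //.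
  - move=> [k /= kn]; rewrite /G /= => h; apply: le_trans h _.
    exact: (le_bigmax 0 (fun i => X i w) (inord k)).
have mA : measurable [set w | (t <= \big[Order.max/0]_(i < n.+1) X i w)%R].
  rewrite eqA; apply: bigsetU_measurable => k _.
  have -> : G k = X (inord k) @^-1` `[t, +oo[.
    by apply/seteqP; split => w /=; rewrite in_itv /= andbT.
  by rewrite -[X in measurable X]setTI; apply: mX.
have GF k : G k `<=` F k.
  move=> w; rewrite /G /F /Z /= => h.
  have : Np `^ alpha * t <= Np `^ alpha * X (inord k) w.
    by apply: ler_wpM2l => //; exact: powR_ge0.
  have -> : Np `^ alpha * t = expR (eps * L).
    by rewrite /t !pE -expRD; congr expR; ring.
  apply: lt_le_trans; rewrite /c gtr_pMl ?expR_gt0 //; lra.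
have sub := @content_subadditive _ _ _ P [set w | (t <= \big[Order.max/0]_(i < n.+1) X i w)%R] F n.+1
   (fun k _ => mF k) mA.
have hsum : (P [set w | (t <= \big[Order.max/0]_(i < n.+1) X i w)%R] <= (Np * B)%:E)%E.
  apply: le_trans (sub _) _.
    rewrite eqA => w; rewrite -!bigcup_mkord => -[k kn Gw]; exists k => //; exact: GF.
  apply: le_trans (_ : (\sum_(k < n.+1) B%:E <= _)%E).
    apply: lee_sum => k _; exact: tail.
  by rewrite sumEFin sumr_const card_ord mulr_natl.
have hle1 := probability_le1 P mA.
rewrite /t in hle1 hsum.
case: (leP 1 ((eps - delta)^-1 * Np `^ (- delta))) => H1.
  by apply: le_trans hle1 _; rewrite lee_fin.
apply: le_trans hsum _; rewrite lee_fin.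
have L0 : 0 <= L by rewrite /L ln_ge0.
rewrite pE in H1 *.
apply: le_trans (@real_part _ _ _ _ L0 d0 de e1 _) => //.
rewrite NpE /B -/c; apply: ler_wpM2l; first exact: expR_ge0.
rewrite -[X in _ <= X]mul1r; apply: ler_wpM2r => //.
by apply: divr_ge0; [exact: expR_ge0| exact: ltW].
Qed.
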